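(* Let $x_0\ge x_1\ge\cdots\ge x_t$ be a non-increasing sequence of reals and let $f$ be a nonnegative, non-decreasing, continuously differentiable function on $[x_t,x_0]$ such that $x_n-x_{n+1}\ge f(x_{n+1})$ for all $n=0,1,\dots,t-1$. Then $\ln\frac{f(x_0)}{f(x_t)}+\int_{x_t}^{x_0}\frac{1}{f(x)}\,dx\ge t$. *)

(* Defs.v *)
From Stdlib Require Import Reals.
From Coquelicot Require Import Coquelicot.
Open Scope R_scope.

(* f' is the derivative of f on the closed interval [a,b], with one-sided
   derivatives at the endpoints (difference quotients taken within [a,b]). *)
Definition derivative_on (a b : R) (f f' : R -> R) : Prop :=
  forall x, a <= x <= b ->
    filterlim (fun y => (f y - f x) / (y - x))
      (within (fun y => a <= y <= b /\ y <> x) (locally x))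
      (locally (f' x)).

Definition C1_on (a b : R) (f : R -> R) : Prop :=
  exists f' : R -> R, derivative_on a b f f' /\
    forall x, a <= x <= b ->
      filterlim f' (within (fun y => a <= y <= b) (locally x)) (locally (f' x)).

(* Main.v *)
Require Import Defs.
From Stdlib Require Import Reals Lra Lia.
From Coquelicot Require Import Coquelicot.
Open Scope R_scope.

Lemma ball_R (c e y : R) : ball c e y <-> Rabs (y - c) < e.
Proof. unfold ball; simpl; unfold AbsRing_ball, abs, minus, plus, opp; simpl. tauto. Qed.

Lemma fcont (a b : R) (f : R -> R) (HC1 : C1_on a b f) :
  forall x, a <= x <= b -> forall eps, 0 < eps -> exists d, 0 < d /\
    forall y, a <= y <= b -> Rabs (y - x) < d -> Rabs (f y - f x) < eps.
Proof.
  destruct HC1 as [f' [Hd _]]. intros x Hx eps He.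
  specialize (Hd x Hx).
  assert (H := Hd (ball (f' x) 1) (locally_ball _ (mkposreal 1 Rlt_0_1))).
  destruct H as [d Hd']. simpl in Hd'.
  set (M := Rabs (f' x) + 1).
  assert (HM : 0 < M) by (unfold M; pose proof (Rabs_pos (f' x)); lra).
  exists (Rmin d (eps / M)). split.
  { apply Rmin_pos. apply cond_pos. apply Rdiv_lt_0_compat; lra. }
  intros y Hy Hyx.
  destruct (Req_dec y x) as [E|E].
  { subst. replace (f x - f x) with 0 by ring. rewrite Rabs_R0. lra. }
  assert (Hb : ball x d y).
  { apply ball_R. pose proof (Rmin_l d (eps/M)). lra. }
  specialize (Hd' y Hb (conj Hy E)). apply ball_R in Hd'.
  set (q := (f y - f x) / (y - x)) in Hd'.
  assert (Hq : f y - f x = q * (y - x)) by (unfold q; field; lra).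
  rewrite Hq, Rabs_mult.
  assert (Hq1 : Rabs q < M).
  { unfold M. pose proof (Rabs_triang_inv q (f' x)).
    assert (Rabs (q - f' x) < 1) by exact Hd'. lra. }
  assert (Hyx2 : Rabs (y - x) < eps / M) by (pose proof (Rmin_r d (eps/M)); lra).
  assert (Hyx3 : Rabs (y - x) * M < eps).
  { apply (Rmult_lt_compat_r M) in Hyx2; [|lra].
    replace (eps / M * M) with eps in Hyx2 by (field; lra). lra. }
  pose proof (Rabs_pos q). pose proof (Rabs_pos (y - x)). nra.
Qed.

Definition clamp (a b y : R) := Rmax a (Rmin b y).

Lemma clamp_in a b y : a <= b -> a <= clamp a b y <= b.
Proof. intros. unfold clamp, Rmax, Rmin. repeat destruct Rle_dec; lra. Qed.

Lemma clamp_id a b y : a <= y <= b -> clamp a b y = y.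
Proof. intros. unfold clamp, Rmax, Rmin. repeat destruct Rle_dec; lra. Qed.

Lemma clamp_lip a b y z : a <= b -> Rabs (clamp a b y - clamp a b z) <= Rabs (y - z).
Proof.
  intros. unfold clamp, Rmax, Rmin. repeat destruct Rle_dec;
  unfold Rabs; repeat destruct Rcase_abs; lra.
Qed.

Lemma clamp_cont a b f (Hab : a <= b) (HC1 : C1_on a b f) z :
  continuity_pt (fun y => f (clamp a b y)) z.
Proof.
  intros eps He.
  destruct (fcont a b f HC1 (clamp a b z) (clamp_in a b z Hab) eps He) as [d [Hd Hc]].
  exists d. split; [lra|]. intros y [_ Hy].
  unfold R_dist in *. simpl in *. unfold R_dist in Hy.
  apply Hc. apply clamp_in; lra.
  pose proof (clamp_lip a b y z Hab). lra.
Qed.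

Lemma int_ex a b f (Hab : a <= b) (HC1 : C1_on a b f)
  (Hp : forall y, a <= y <= b -> 0 < f y) c d :
  a <= c -> c <= d -> d <= b -> ex_RInt (fun y => / f y) c d.
Proof.
  intros H1 H2 H3.
  apply (ex_RInt_ext (fun y => / f (clamp a b y))).
  { intros y Hy. rewrite Rmin_left, Rmax_right in Hy by lra.
    rewrite clamp_id by lra. reflexivity. }
  apply (@ex_RInt_continuous R_CompleteNormedModule). intros z _.
  apply continuity_pt_filterlim.
  apply (continuity_pt_inv (fun y => f (clamp a b y))).
  apply clamp_cont; auto.
  pose proof (Hp _ (clamp_in a b z Hab)). lra.
Qed.

Lemma step a b f (Hab : a <= b) (HC1 : C1_on a b f)
  (Hp : forall y, a <= y <= b -> 0 < f y)
  (Hmono : forall y z, a <= y <= b -> a <= z <= b -> y <= z -> f y <= f z)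
  c d : a <= c -> c <= d -> d <= b -> d - c >= f c ->
  ln (f d / f c) + RInt (fun y => / f y) c d >= 1.
Proof.
  intros H1 H2 H3 H4.
  assert (Pc : 0 < f c) by (apply Hp; lra).
  assert (Pd : 0 < f d) by (apply Hp; lra).
  assert (Hcd : f c <= f d) by (apply Hmono; lra).
  assert (HI : RInt (fun _ => / f d) c d <= RInt (fun y => / f y) c d).
  { apply RInt_le; auto. apply ex_RInt_const. apply (int_ex a b); auto.
    intros y Hy. apply Rinv_le_contravar. apply Hp; lra. apply Hmono; lra. }
  rewrite RInt_const in HI. unfold scal in HI; simpl in HI. unfold mult in HI; simpl in HI.
  assert (HI2 : f c / f d <= (d - c) * / f d).
  { unfold Rdiv. apply Rmult_le_compat_r. left; apply Rinv_0_lt_compat; lra. lra. }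
  set (u := f d / f c).
  assert (Hu : 0 < u) by (unfold u; apply Rdiv_lt_0_compat; lra).
  assert (Hinv : f c / f d = / u) by (unfold u; field; lra).
  pose proof (exp_ineq1_le (- ln u)).
  rewrite exp_Ropp, exp_ln in H by lra.
  lra.
Qed.

Theorem mainTheorem9 (t : nat) (x : nat -> R) (f : R -> R)
  (Hx : forall n, (n < t)%nat -> x (S n) <= x n)
  (Hnonneg : forall y, x t <= y <= x 0%nat -> 0 <= f y)
  (Hmono : forall y z, x t <= y <= x 0%nat -> x t <= z <= x 0%nat -> y <= z -> f y <= f z)
  (HC1 : C1_on (x t) (x 0%nat) f)
  (Hstep : forall n, (n < t)%nat -> x n - x (S n) >= f (x (S n)))
  (Hpos : 0 < f (x t)) :
  ln (f (x 0%nat) / f (x t)) + RInt (fun y => / f y) (x t) (x 0%nat) >= INR t.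
Proof.
  assert (Hchain : forall k j, (k + j <= t)%nat -> x (k + j)%nat <= x k).
  { intros k j. induction j as [|j IH]; intros Hkj.
    - rewrite Nat.add_0_r; lra.
    - replace (k + S j)%nat with (S (k + j)) by lia.
      pose proof (Hx (k + j)%nat ltac:(lia)). pose proof (IH ltac:(lia)). lra. }
  assert (Hin : forall k, (k <= t)%nat -> x t <= x k <= x 0%nat).
  { intros k Hk. split.
    - replace t with (k + (t - k))%nat at 1 by lia. apply Hchain; lia.
    - apply (Hchain 0%nat k). lia. }
  assert (Hab : x t <= x 0%nat) by (apply Hin; lia).
  assert (Hp : forall y, x t <= y <= x 0%nat -> 0 < f y).
  { intros y Hy. pose proof (Hmono (x t) y ltac:(lra) Hy ltac:(lra)). lra. }
  assert (Main : forall k, (k <= t)%nat ->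
     ln (f (x 0%nat) / f (x k)) + RInt (fun y => / f y) (x k) (x 0%nat) >= INR k).
  { induction k as [|k IH]; intros Hk.
    - rewrite RInt_point. unfold zero; simpl.
      replace (f (x 0%nat) / f (x 0%nat)) with 1.
      rewrite ln_1. simpl. lra.
      field. pose proof (Hp (x 0%nat) ltac:(lra)). lra.
    - rewrite S_INR. specialize (IH ltac:(lia)).
      pose proof (Hin k ltac:(lia)) as Hk1.
      pose proof (Hin (S k) ltac:(lia)) as Hk2.
      pose proof (Hx k ltac:(lia)) as Hk3.
      pose proof (step (x t) (x 0%nat) f Hab HC1 Hp Hmono (x (S k)) (x k)
        ltac:(lra) ltac:(lra) ltac:(lra) (Hstep k ltac:(lia))) as HS.
      rewrite <- (RInt_Chasles (fun y => / f y) (x (S k)) (x k) (x 0%nat)).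
      2: apply (int_ex (x t) (x 0%nat)); auto; lra.
      2: apply (int_ex (x t) (x 0%nat)); auto; lra.
      unfold plus; simpl.
      pose proof (Hp _ Hk1). pose proof (Hp _ Hk2). pose proof (Hp (x 0%nat) ltac:(lra)).
      replace (f (x 0%nat) / f (x (S k))) with
        ((f (x k) / f (x (S k))) * (f (x 0%nat) / f (x k))) by (field; lra).
      rewrite ln_mult by (apply Rdiv_lt_0_compat; lra).
      lra. }
  apply Main. lia.
Qed.
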